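(* Let $L$ be a relational language and $<\,\notin L$ a binary relation symbol. Let $\mathcal{S} = (S,L^S,<^S)$ be an enumerated $L$-structure such that $(S,L^S)$ is a Fraïssé limit which has finite big Ramsey degrees, whose age has the strong amalgamation property, and which has natural 1-point extensions. Then for every $\mathcal{A}\in\mathrm{Fin}(\mathcal{S})$ there is $n\in\mathbb{N}$ such that for every $k\in\mathbb{N}$ and every family of colorings $\gamma_\mathcal{B} : \binom{\mathcal{B}}{\mathcal{A}}\to k$ indexed by $\mathcal{B}\in\mathrm{Fin}(\mathcal{S})$, there are a substructure $\mathcal{S}'$ of $\mathcal{S}$ isomorphic to $\mathcal{S}$ and a choice function $c$ assigning to each $\mathcal{E}\in\binom{\mathcal{S}'}{\mathcal{A}}$ some $c(\mathcal{E})\in\mathrm{Fin}(\mathcal{S})$ with $\mathcal{E}\le c(\mathcal{E})$, such that $$\Big|\Big\{\gamma_{c(\mathcal{E})}(\mathcal{E}) : \mathcal{E}\in\binom{\mathcal{S}'}{\mathcal{A}}\Big\}\Big|\le n.$$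
   Context: For $L$-structures, an embedding is an injective map preserving and reflecting all relations; $\mathrm{Emb}(\mathcal{A},\mathcal{B})$ is the set of embeddings. $\mathcal{A}\le\mathcal{B}$ means $\mathcal{A}$ is an induced substructure of $\mathcal{B}$; $\mathcal{S}[A]$ is the substructure induced on $A$. $\mathrm{Fin}(\mathcal{S})=\{\mathcal{S}[A]:\varnothing\ne A\subseteq S, A\text{ finite}\}$, and $\binom{\mathcal{B}}{\mathcal{A}}=\{\mathcal{E}:\mathcal{E}\cong\mathcal{A},\ \mathcal{E}\le\mathcal{B}\}$ (all as $(L\cup\{<\})$-structures). An enumerated $L$-structure is an $(L\cup\{<\})$-structure $(S,L^S,<^S)$ with $(S,<^S)$ of order type $\omega$. A Fraïssé limit is a countably infinite ultrahomogeneous structure; its age (finite structures embeddable into it) has strong amalgamation if any two embeddings $f:\mathcal{A}\hookrightarrow\mathcal{B}$, $g:\mathcal{A}\hookrightarrow\mathcal{C}$ in the age can be completed by embeddings $f':\mathcal{B}\hookrightarrow\mathcal{D}$, $g':\mathcal{C}\hookrightarrow\mathcal{D}$ into some $\mathcal{D}$ in the age with $f'\circ f=g'\circ g$ and $f'(B)\cap g'(C)=f'(f(A))$. $\mathcal{F}$ has finite big Ramsey degrees if for every finite $\mathcal{A}$ in its age there is $n$ such that every coloring $\chi:\mathrm{Emb}(\mathcal{A},\mathcal{F})\to k$ ($k\in\mathbb{N}$) admits $w\in\mathrm{Emb}(\mathcal{F},\mathcal{F})$ with $|\chi(w\circ\mathrm{Emb}(\mathcal{A},\mathcal{F}))|\le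 n$. $\mathcal{F}$ has natural 1-point extensions if there is a functor $J:\mathrm{Fin}(\mathcal{F})\to\mathrm{Fin}(\mathcal{F})$ (morphisms: embeddings) such that for each $\mathcal{A}=(A,L^A)$ with $J(\mathcal{A})=(A',L^{A'})$, $\mathcal{A}\le J(\mathcal{A})$ and $|A'\setminus A|=1$, and for each embedding $f:\mathcal{A}\hookrightarrow\mathcal{B}$, $J(f)$ extends $f$ and maps the point of $A'\setminus A$ to the point of $B'\setminus B$. *)

(* Defs.v *)
From mathcomp Require Import all_boot.
From mathcomp Require Import finmap.
Set Implicit Arguments. Unset Strict Implicit. Unset Printing Implicit Defensive.
Local Open Scope fset_scope.

Record lang := Lang { sym : Type; ar : sym -> nat }.

Definition interp (L : lang) (T : Type) :=
  forall s : sym L, ('I_(ar s) -> T) -> Prop.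

Record structure (L : lang) := Structure {
  carrier :> Type;
  rel : interp L carrier }.
Arguments rel {L} s _ _ : rename.

Definition finite_ne (T : Type) :=
  (exists x : T, True) /\
  exists (m : nat) (e : 'I_m -> T), forall x, exists i, e i = x.

Definition is_emb L (A B : structure L) (f : A -> B) :=
  injective f /\
  forall s (t : 'I_(ar s) -> A), rel A s t <-> rel B s (f \o t).

Definition is_emb_into L (A : structure L) (S : Type) (R : interp L S)
    (f : A -> S) :=
  injective f /\ forall s (t : 'I_(ar s) -> A), rel A s t <-> R s (f \o t).

Definition is_self_emb L (S : Type) (R : interp L S) (w : S -> S) :=
  injective w /\ forall s (t : 'I_(ar s) -> S), R s t <-> R s (w \o t).

Definition in_age L (S : Type) (R : interp L S) (A : structure L) :=
  finite_ne A /\ exists f : A -> S, is_emb_into R f.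

(** f (a function S -> S, considered on A) is an L-embedding S[A] -> S[B]
    of induced substructures on finite sets A, B. *)
Definition sub_emb L (S : choiceType) (R : interp L S) (A B : {fset S})
    (f : S -> S) :=
  {in A &, injective f} /\ {in A, forall x, f x \in B} /\
  forall s (t : 'I_(ar s) -> S), (forall i, t i \in A) ->
    (R s t <-> R s (f \o t)).

Definition sub_iso L (S : choiceType) (R : interp L S) (A B : {fset S})
    (f : S -> S) :=
  sub_emb R A B f /\ {in B, forall y, exists2 x, x \in A & f x = y}.

Definition sub_iso_lt L (S : choiceType) (R : interp L S) (lt : S -> S -> Prop)
    (A B : {fset S}) (f : S -> S) :=
  sub_iso R A B f /\ {in A &, forall x y, lt x y <-> lt (f x) (f y)}.

Definition order_type_omega (S : Type) (lt : S -> S -> Prop) :=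
  exists e : nat -> S, bijective e /\ forall m n, lt (e m) (e n) <-> (m < n)%N.

Definition ultrahomogeneous L (S : choiceType) (R : interp L S) :=
  forall (A B : {fset S}) (f : S -> S), sub_iso R A B f ->
    exists g : S -> S, bijective g /\
      (forall s (t : 'I_(ar s) -> S), R s t <-> R s (g \o t)) /\
      {in A, forall x, g x = f x}.

Definition fraisse_limit L (S : choiceType) (R : interp L S) :=
  (exists e : nat -> S, bijective e) /\ ultrahomogeneous R.

Definition strong_amalgamation L (S : Type) (R : interp L S) :=
  forall (A B C : structure L) (f : A -> B) (g : A -> C),
    in_age R A -> in_age R B -> in_age R C -> is_emb f -> is_emb g ->
    exists (D : structure L) (f' : B -> D) (g' : C -> D),
      [/\ in_age R D, is_emb f', is_emb g',
          (forall a, f' (f a) = g' (g a)) &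
          (forall b c, f' b = g' c -> exists a, f' (f a) = f' b)].

Definition finite_big_ramsey_degrees L (S : Type) (R : interp L S) :=
  forall A : structure L, in_age R A ->
    exists n : nat, forall (k : nat) (chi : (A -> S) -> 'I_k),
      exists w : S -> S, is_self_emb R w /\
        exists cols : seq 'I_k, (size cols <= n)%N /\
          forall e : A -> S, is_emb_into R e -> chi (w \o e) \in cols.

(** Natural 1-point extensions: a functor J on Fin(S,R) (objects: induced
    substructures on finite nonempty subsets; morphisms: L-embeddings,
    represented by functions S -> S considered on the domain). *)
Definition natural_one_point_ext L (S : choiceType) (R : interp L S) :=
  exists (J : {fset S} -> {fset S})
         (Jm : {fset S} -> {fset S} -> (S -> S) -> (S -> S)),
  [/\ (forall A, A != fset0 -> A `<=` J A /\ #|` J A `\` A| = 1),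
      (forall A B f, A != fset0 -> B != fset0 -> sub_emb R A B f ->
         [/\ sub_emb R (J A) (J B) (Jm A B f),
             {in A, forall x, Jm A B f x = f x} &
             {in J A `\` A, forall x, Jm A B f x \in J B `\` B}]),
      (forall A B f f', A != fset0 -> B != fset0 -> sub_emb R A B f ->
         {in A, f =1 f'} -> {in J A, Jm A B f =1 Jm A B f'}),
      (forall A, A != fset0 -> {in J A, Jm A A id =1 id}) &
      (forall A B C f g, A != fset0 -> B != fset0 -> C != fset0 ->
         sub_emb R A B f -> sub_emb R B C g ->
         {in J A, forall x, Jm A C (g \o f) x = Jm B C g (Jm A B f x)})].

Definition iso_to_sub L (S : Type) (R : interp L S) (lt : S -> S -> Prop)
    (X : S -> Prop) :=
  exists h : S -> S,
    [/\ injective h, (forall x, X (h x)), (forall y, X y -> exists x, h x = y),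
        (forall s (t : 'I_(ar s) -> S), R s t <-> R s (h \o t)) &
        (forall x y, lt x y <-> lt (h x) (h y))].

Definition in_binom L (S : choiceType) (R : interp L S) (lt : S -> S -> Prop)
    (X : S -> Prop) (A E : {fset S}) :=
  (forall x, x \in E -> X x) /\ exists f : S -> S, sub_iso_lt R lt A E f.

(* Main.v *)
Require Import Defs.
From mathcomp Require Import all_boot.
From mathcomp Require Import finmap.
From Stdlib Require Import Classical ClassicalEpsilon FunctionalExtensionality.
Unset Printing Implicit Defensive.
Local Open Scope fset_scope.

Section P.
Variables (L : lang) (S : choiceType) (R : interp L S).

Definition substr (B : {fset S}) : structure L :=
  @Structure L B (fun s t => R s (fun i => val (t i))).

Lemma finite_ne_sub (B : {fset S}) : B != fset0 -> finite_ne (substr B).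
Proof.
move=> /fset0Pn [x xB]; split; first by exists [` xB].
exists #|{: B}|, enum_val => x0; exists (enum_rank x0); exact: enum_rankK.
Qed.

Lemma in_age_sub (B : {fset S}) : B != fset0 -> in_age R (substr B).
Proof.
move=> B0; split; first exact: finite_ne_sub.
by exists val; split; [exact: val_inj|].
Qed.

Lemma is_emb_incl (B C : {fset S}) (h : B `<=` C) :
  @is_emb L (substr B) (substr C) (fincl h).
Proof. by split; [exact: fincl_inj|]. Qed.

Definition img (B : {fset S}) (f : B -> S) := [fset f x | x : B].
Definition upd (a y x : S) := if x == a then y else x.

Lemma noalg1 (D K : {fset S}) (a : S) :
  strong_amalgamation R -> ultrahomogeneous R ->
  D != fset0 -> a \notin D ->
  exists y, y \notin K /\ forall s (t : 'I_(ar s) -> S), (forall i, t i \in a |` D) ->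
     (R s t <-> R s (fun i => upd a y (t i))).
Proof.
move=> sap uh D0 aD.
have hAB : D `<=` a |` D by apply/fsubsetP => x xD; rewrite in_fsetU xD orbT.
have hAC : D `<=` D `|` K by apply/fsubsetP => x xD; rewrite in_fsetU xD.
have DK0 : D `|` K != fset0.
  by case/fset0Pn: D0 => x xD; apply/fset0Pn; exists x; rewrite in_fsetU xD.
have aD0 : a |` D != fset0 by apply/fset0Pn; exists a; exact: fsetU11.
have [SD [f' [g' [ageD embf embg comm strong]]]] :=
  sap (substr D) (substr (a |` D)) (substr (D `|` K)) (fincl hAB) (fincl hAC)
    (in_age_sub _ D0) (in_age_sub _ aD0) (in_age_sub _ DK0) (is_emb_incl _ _ hAB) (is_emb_incl _ _ hAC).
case: ageD => _ [io [ioinj iorel]].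
case: embf => f'inj f'rel; case: embg => g'inj g'rel.
pose psi (x : S) : S := if insub x is Some u then io (g' u) else x.
have psiE (x : S) (xDK : x \in D `|` K) : psi x = io (g' [` xDK]).
  by rewrite /psi insubT.
pose Q := [fset psi x | x in D `|` K].
have iso : sub_iso R (D `|` K) Q psi.
  split; [split; [|split]|].
  - move=> x y xDK yDK; rewrite (psiE x xDK) (psiE y yDK).
    by move=> /ioinj /g'inj /(congr1 val).
  - by move=> x xDK; apply/imfsetP; exists x.
  - move=> s t tDK.
    pose tt i : (D `|` K) := [` tDK i].
    have -> : psi \o t = io \o (g' \o tt).
      by apply: functional_extensionality => i /=; rewrite (psiE _ (tDK i)).
    exact: iff_trans (g'rel s tt) (iorel s (g' \o tt)).
  - by move=> y /imfsetP [x xDK ->]; exists x.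
have [tau [[sig tauK sigK] [taurel tauE]]] := uh _ _ _ iso.
have sigrel s t : R s t <-> R s (sig \o t).
  have := taurel s (sig \o t).
  have -> : tau \o (sig \o t) = t by apply: functional_extensionality => i /=; rewrite sigK.
  by move=> h; split => ?; apply/h.
have aB : a \in a |` D := fsetU11 a D.
pose p := io (f' [` aB]).
exists (sig p); split.
  apply/negP => yK.
  have yDK : sig p \in D `|` K by rewrite in_fsetU yK orbT.
  have := tauE _ yDK; rewrite sigK (psiE _ yDK) => /ioinj /strong [d].
  move=> /f'inj /(congr1 val) /= ad.
  by move: aD; rewrite -ad (fsvalP d).
move=> s t taD.
pose tt i : (a |` D) := [` taD i].
have e1 : sig \o (io \o (f' \o tt)) = (fun i => upd a (sig p) (t i)).
  apply: functional_extensionality => i /=; rewrite /upd; case: eqP => [ta|tna].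
    by congr (sig (io (f' _))); apply: val_inj; rewrite /= ta.
  have tdi : t i \in D.
    by move: (taD i); rewrite in_fsetU in_fset1 => /orP [/eqP //|].
  have -> : tt i = fincl hAB [` tdi] by apply: val_inj.
  have tDK : t i \in D `|` K by rewrite in_fsetU tdi.
  rewrite comm.
  have -> : fincl hAC [` tdi] = [` tDK] by apply: val_inj.
  by rewrite -psiE -tauE // tauK.
rewrite -e1.
apply: iff_trans (f'rel s tt) _.
apply: iff_trans (iorel s (f' \o tt)) _.
exact: sigrel.
Qed.
Lemma noalg (D K : {fset S}) (a : S) :
  (exists d : S, d != a) ->
  strong_amalgamation R -> ultrahomogeneous R -> a \notin D ->
  exists y, y \notin K /\ forall s (t : 'I_(ar s) -> S), (forall i, t i \in a |` D) ->
     (R s t <-> R s (fun i => upd a y (t i))).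
Proof.
move=> [d da] sap uh aD.
have aD' : a \notin d |` D by rewrite in_fsetU in_fset1 eq_sym (negbTE da) /=.
have D'0 : d |` D != fset0 by apply/fset0Pn; exists d; exact: fsetU11.
have [y [yK hy]] := noalg1 _ K _ sap uh D'0 aD'.
exists y; split => // s t tD; apply: hy => i; move: (tD i); rewrite !in_fsetU.
by case/orP => ->; rewrite ?orbT.
Qed.

Lemma ext1 (D K : {fset S}) (a : S) (phi : S -> S) :
  (exists d : S, d != a) -> strong_amalgamation R -> ultrahomogeneous R -> a \notin D ->
  {in D &, injective phi} ->
  (forall s (t : 'I_(ar s) -> S), (forall i, t i \in D) -> (R s t <-> R s (phi \o t))) ->
  exists y, y \notin K /\ forall s (t : 'I_(ar s) -> S), (forall i, t i \in a |` D) ->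
     (R s t <-> R s (fun i => if t i == a then y else phi (t i))).
Proof.
move=> ex sap uh aD phiinj phirel.
have iso : sub_iso R D [fset phi x | x in D] phi.
  split; [split; [|split]|] => //.
  - by move=> x xD; apply/imfsetP; exists x.
  - by move=> y /imfsetP [x xD ->]; exists x.
have [g [[gi gK giK] [grel gE]]] := uh _ _ _ iso.
have [y0 [y0K hy0]] := noalg _ [fset gi x | x in K] _ ex sap uh aD.
exists (g y0); split.
  apply/negP => gyK; move/negP: y0K; apply; apply/imfsetP; exists (g y0) => //.
move=> s t tD.
apply: iff_trans (hy0 s t tD) _.
have -> : (fun i => if t i == a then g y0 else phi (t i)) = g \o (fun i => upd a y0 (t i)).
  apply: functional_extensionality => i /=; rewrite /upd; case: eqP => // ta.
  rewrite gE //; move: (tD i); rewrite in_fsetU in_fset1 => /orP[/eqP //|//].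
exact: grel.
Qed.

Lemma ext2 (e : nat -> S) (idx : S -> nat) (w : S -> S) (N : nat) (D : {fset S}) (a : S) (phi : S -> S) :
  cancel e idx -> cancel idx e -> injective w ->
  strong_amalgamation R -> ultrahomogeneous R -> a \notin D ->
  {in D &, injective phi} ->
  (forall s (t : 'I_(ar s) -> S), (forall i, t i \in D) -> (R s t <-> R s (phi \o t))) ->
  exists y, N < idx (w y) /\ forall s (t : 'I_(ar s) -> S), (forall i, t i \in a |` D) ->
     (R s t <-> R s (fun i => if t i == a then y else phi (t i))).
Proof.
move=> eK idxK winj sap uh aD phiinj phirel.
have ex : exists d : S, d != a.
  case: (eqVneq (e 0) a) => [e0a|]; last by exists (e 0).
  exists (e 1); apply/eqP => e1a; have := congr1 idx (etrans e1a (esym e0a)).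
  by rewrite !eK.
have pre : forall i : 'I_N.+1, exists z : S, forall y, w y = e i -> z = y.
  move=> i; case: (classic (exists y, w y = e i)) => [[y wy]|ny].
    by exists y => y' wy'; apply: winj; rewrite wy wy'.
  by exists a => y wy; case: ny; exists y.
have [fz fzP] := fin_all_exists pre.
have [y [yK hy]] := ext1 _ [fset fz i | i : 'I_N.+1] _ _ ex sap uh aD phiinj phirel.
exists y; split => //.
rewrite ltnNge; apply/negP => le.
move/negP: yK; apply; apply/imfsetP.
exists (Ordinal (le : idx (w y) < N.+1)) => //=.
by rewrite (fzP _ y) // /= idxK.
Qed.
Definition Inv (idx : S -> nat) (w : S -> S) (n : nat) (b : nat -> S) :=
  (forall s (t : 'I_(ar s) -> S), (forall j, idx (t j) < n) ->
     (R s t <-> R s (fun j => b (idx (t j))))) /\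
  (forall i j, i < j -> j < n -> idx (w (b i)) < idx (w (b j))).

Lemma Inv_ext idx w n (b b' : nat -> S) :
  (forall i, i < n -> b i = b' i) -> Inv idx w n b -> Inv idx w n b'.
Proof.
move=> bb' [h1 h2]; split.
  move=> s t tn.
  have -> : (fun j => b' (idx (t j))) = (fun j => b (idx (t j))).
    by apply: functional_extensionality => j; rewrite bb'.
  exact: h1.
by move=> i j ij jn; rewrite -!bb' // ?(ltn_trans ij jn) //; exact: h2.
Qed.

Lemma Inv0 idx w (b : nat -> S) : Inv idx w 0 b.
Proof.
split => //.
move=> s t tn.
have -> : (fun j => b (idx (t j))) = t.
  by apply: functional_extensionality => j; have := tn j.
by [].
Qed.

Lemma Inv_step (e : nat -> S) idx w n (b : nat -> S) :
  cancel e idx -> cancel idx e -> injective w ->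
  strong_amalgamation R -> ultrahomogeneous R ->
  Inv idx w n b -> exists y, Inv idx w n.+1 (fun i => if i == n then y else b i).
Proof.
move=> eK idxK winj sap uh [inv1 inv2].
pose D := [fset e (val i) | i : 'I_n].
have memD x : x \in D -> idx x < n.
  by move=> /imfsetP [i _ ->]; rewrite eK ltn_ord.
have memD' x : idx x < n -> x \in D.
  by move=> h; apply/imfsetP; exists (Ordinal h) => //; rewrite /= idxK.
have aD : e n \notin D by apply/negP => /memD; rewrite eK ltnn.
have binj i j : i < n -> j < n -> b i = b j -> i = j.
  move=> ilt jlt bij; case: (ltngtP i j) => // c.
    by have := inv2 _ _ c jlt; rewrite bij ltnn.
  by have := inv2 _ _ c ilt; rewrite bij ltnn.
have phiinj : {in D &, injective (fun x => b (idx x))}.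
  move=> x y xD yD /= bxy.
  by rewrite -(idxK x) -(idxK y) (binj _ _ (memD _ xD) (memD _ yD) bxy).
have phirel : forall s (t : 'I_(ar s) -> S), (forall i, t i \in D) ->
    (R s t <-> R s ((fun x => b (idx x)) \o t)).
  by move=> s t tD; apply: inv1 => j; apply: memD.
pose N := \max_(i < n) idx (w (b i)).
have [y [Ny hy]] := ext2 _ _ _ N _ _ _ eK idxK winj sap uh aD phiinj phirel.
exists y; split.
  move=> s t tn.
  have tin : forall i, t i \in e n |` D.
    move=> i; rewrite in_fsetU in_fset1; move: (tn i); rewrite ltnS leq_eqVlt.
    case/orP => [/eqP ti|ti]; first by rewrite -ti idxK eqxx.
    by rewrite memD' ?orbT.
  apply: iff_trans (hy s t tin) _.
  have -> : (fun i => if t i == e n then y else b (idx (t i))) =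
            (fun j => if idx (t j) == n then y else b (idx (t j))).
    apply: functional_extensionality => i.
    have -> : (t i == e n) = (idx (t i) == n).
      by apply/eqP/eqP => [->|<-]; rewrite ?eK ?idxK.
    by [].
  by [].
move=> i j ij; rewrite ltnS leq_eqVlt => /orP [/eqP jn|jn].
  subst j; rewrite eqxx (ltn_eqF ij) /=.
  apply: leq_ltn_trans Ny; exact: (@leq_bigmax _ (fun k : 'I_n => idx (w (b k))) (Ordinal ij)).
rewrite (ltn_eqF jn) (ltn_eqF (ltn_trans ij jn)); exact: inv2 ij jn.
Qed.

Definition nextB idx w (n : nat) (b : nat -> S) : nat -> S :=
  epsilon (inhabits b) (fun b' => Inv idx w n.+1 b' /\ forall i, i < n -> b' i = b i).

Fixpoint Bs idx w (b0 : nat -> S) n : nat -> S :=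
  match n with 0 => b0 | n.+1 => nextB idx w n (Bs idx w b0 n) end.

Lemma build (e : nat -> S) (idx : S -> nat) (w : S -> S) :
  cancel e idx -> cancel idx e -> injective w ->
  strong_amalgamation R -> ultrahomogeneous R ->
  exists g : S -> S, (forall s (t : 'I_(ar s) -> S), R s t <-> R s (g \o t)) /\
    (forall x y, idx x < idx y <-> idx (w (g x)) < idx (w (g y))).
Proof.
move=> eK idxK winj sap uh.
pose b0 := fun _ : nat => e 0.
have BsP n : Inv idx w n (Bs idx w b0 n) /\
   (forall i, i < n.-1 -> Bs idx w b0 n i = Bs idx w b0 n.-1 i).
  elim: n => [|n [IH _]]; first by split => //; exact: Inv0.
  have [y hy] := @Inv_step e idx w n _ eK idxK winj sap uh IH.
  apply: (epsilon_spec (inhabits (Bs idx w b0 n))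
    (fun b' => Inv idx w n.+1 b' /\ forall i, i < n -> b' i = Bs idx w b0 n i)).
  exists (fun i => if i == n then y else Bs idx w b0 n i); split => // i ilt.
  by rewrite (ltn_eqF ilt).
have agree m i : i < m -> Bs idx w b0 m i = Bs idx w b0 i.+1 i.
  elim: m => [//|m IH]; rewrite ltnS leq_eqVlt => /orP [/eqP ->//|im].
  by rewrite (proj2 (BsP m.+1)) //= IH.
pose bf i := Bs idx w b0 i.+1 i.
have bfI n : Inv idx w n bf.
  by apply: Inv_ext (proj1 (BsP n)) => i; apply: agree.
have mono i j : i < j -> idx (w (bf i)) < idx (w (bf j)).
  by move=> ij; apply: (proj2 (bfI j.+1)) ij _.
exists (fun x => bf (idx x)); split.
  move=> s t; apply: (proj1 (bfI (\max_(j < ar s) idx (t j)).+1)) => j.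
  by rewrite ltnS (@leq_bigmax _ (fun k => idx (t k)) j).
move=> x y; split; first exact: mono.
case: (ltngtP (idx x) (idx y)) => // c h.
  by have := mono _ _ c; rewrite ltnNge ltnW.
by move: h; rewrite c ltnn.
Qed.
End P.
Arguments substr {L S} R B.
Arguments img {S B} f.
Arguments in_age_sub {L S} R {B}.
Arguments build {L S} R e idx w.

Theorem corollary6p8 (L : lang) (S : choiceType) (R : interp L S)
    (lt : S -> S -> Prop) :
  order_type_omega lt ->
  fraisse_limit R ->
  finite_big_ramsey_degrees R ->
  strong_amalgamation R ->
  natural_one_point_ext R ->
  forall A : {fset S}, A != fset0 ->
  exists n : nat, forall (k : nat) (gamma : {fset S} -> {fset S} -> 'I_k),
    exists (X : S -> Prop) (c : {fset S} -> {fset S}),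
      [/\ iso_to_sub R lt X,
          (forall E, in_binom R lt X A E -> c E != fset0 /\ E `<=` c E) &
          exists cols : seq 'I_k, (size cols <= n)%N /\
            forall E, in_binom R lt X A E -> gamma (c E) E \in cols].
Proof.
move=> [e [[idx eK idxK] elt]] [_ uh] bigR sap _ A A0.
have ltE x y : lt x y <-> idx x < idx y.
  by rewrite -{1}(idxK x) -{1}(idxK y); exact: elt.
have [n hn] := bigR (substr R A) (in_age_sub R A0).
exists n => k gamma.
pose chi (f : substr R A -> S) := gamma (img f) (img f).
have [w [[winj wrel] [cols [cols_n colsP]]]] := hn k chi.
have [g [grel gmono]] := build R e idx w eK idxK winj sap uh.
pose h := w \o g.
have hinj : injective h.
  move=> x y /winj gxy.
  case: (ltngtP (idx x) (idx y)) => c.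
  - by have := proj1 (gmono _ _) c; rewrite gxy ltnn.
  - by have := proj1 (gmono _ _) c; rewrite gxy ltnn.
  - by rewrite -(idxK x) c idxK.
exists (fun y => exists x, h x = y), (fun E => E); split.
- exists h; split => //.
  + by move=> x; exists x.
  + move=> s t; exact: iff_trans (grel s t) (wrel s (g \o t)).
  + move=> x y; apply: iff_trans (ltE x y) _; apply: iff_trans (gmono x y) _.
    exact: iff_sym (ltE _ _).
- move=> E [_ [f [[[finj [fmap frel]] fsurj] _]]]; split; last exact: fsubset_refl.
  by case/fset0Pn: A0 => x xA; apply/fset0Pn; exists (f x); exact: fmap.
exists cols; split => // E [EX [f [[[finj [fmap frel]] fsurj] _]]].
have pre : forall x : A, exists z, w (g z) = f (val x).
  by move=> x; case: (EX _ (fmap _ (fsvalP x))) => z <-; exists z.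
have [ez ezP] := fin_all_exists pre.
pose e' (x : substr R A) : S := g (ez x).
have emb : is_emb_into R e'.
  split.
    move=> x y exy; apply: val_inj; apply: finj; try exact: fsvalP.
    by move: exy; rewrite /e' -!ezP => ->.
  move=> s t.
  apply: iff_trans (frel s (fun i => val (t i)) (fun i => fsvalP (t i))) _.
  have -> : f \o (fun i => val (t i)) = w \o (e' \o t).
    by apply: functional_extensionality => i /=; rewrite ezP.
  exact: iff_sym (wrel s (e' \o t)).
have := colsP e' emb; rewrite /chi.
have -> : img (w \o e') = E.
  apply/fsetP => y; apply/imfsetP/idP.
    by move=> [x _ ->]; rewrite /= ezP; exact: fmap (fsvalP x).
  move=> yE; case: (fsurj y yE) => x xA fxy; exists [` xA] => //.
  by rewrite /= ezP.
by [].
Qed.
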